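(* Let $G$ be a finite subset of $\mathbb{N}^2$ that has at least one connected v-bridge. If $G$ contains a connected component $C$ (of the full grid graph of $G$) such that $C\cap(\{r_G\}\times\mathbb{N})\neq\emptyset$ and $C\cap(\mathbb{N}\times\{b_G\})=\emptyset$, then there exists a point $\vec x_E\in G\setminus C$ such that $E(\vec x_E)\notin G$ and $\vec x_E\notin\{r_G\}\times\mathbb{N}$.
   Context: The full grid graph of $V\subseteq\mathbb{Z}^2$ has vertex set $V$ and an edge between $\vec x,\vec y$ iff $\|\vec x-\vec y\|=1$; paths and connected components are taken in this graph. For a finite $S\subseteq\mathbb{Z}^2$ let $l_S=\min_{(x,y)\in S}x$, $r_S=\max_{(x,y)\in S}x$, $b_S=\min_{(x,y)\in S}y$, $t_S=\max_{(x,y)\in S}y$. An h-bridge of $S$ is a subset of $S$ of the form $\{(l_S,y),(r_S,y)\}$; a v-bridge is a subset of $S$ of the form $\{(x,b_S),(x,t_S)\}$. A bridge is connected if there is a simple path in (the full grid graph of) $S$ connecting its two points. Directions: $N(x,y)=(x,y+1)$, $E(x,y)=(x+1,y)$, $S(x,y)=(x,y-1)$, $W(x,y)=(x-1,y)$. *)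

(* Defs.v *)
(* Points of N^2 are pairs (x,y) : nat * nat.
   A finite subset of N^2 is represented by a list G (membership = \in). *)
From mathcomp Require Import all_boot.
Set Implicit Arguments. Unset Strict Implicit. Unset Printing Implicit Defensive.

Definition point := (nat * nat)%type.

Definition grid_adj (p q : point) : bool :=
  ((p.1 == q.1) && ((p.2 == q.2.+1) || (q.2 == p.2.+1))) ||
  ((p.2 == q.2) && ((p.1 == q.1.+1) || (q.1 == p.1.+1))).

Definition dirN (p : point) : point := (p.1, p.2.+1).
Definition dirE (p : point) : point := (p.1.+1, p.2).

Definition lS (S : seq point) : nat := foldr (fun p m => minn p.1 m) (head (0,0) S).1 S.
Definition rS (S : seq point) : nat := foldr (fun p m => maxn p.1 m) (head (0,0) S).1 S.
Definition bS (S : seq point) : nat := foldr (fun p m => minn p.2 m) (head (0,0) S).2 S.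
Definition tS (S : seq point) : nat := foldr (fun p m => maxn p.2 m) (head (0,0) S).2 S.

(* a path in the full grid graph of S from a to b with vertex list a :: p *)
Definition grid_path_in (S : seq point) (a b : point) (p : seq point) : Prop :=
  path grid_adj a p /\ last a p = b /\ all (fun z => z \in S) (a :: p).

Definition simple_grid_path_in (S : seq point) (a b : point) (p : seq point) : Prop :=
  grid_path_in S a b p /\ uniq (a :: p).

Definition connected_in (S : seq point) (a b : point) : Prop :=
  exists p, grid_path_in S a b p.

Definition has_connected_vbridge (S : seq point) : Prop :=
  exists x : nat, (x, bS S) \in S /\ (x, tS S) \in S /\
    exists p, simple_grid_path_in S (x, bS S) (x, tS S) p.

Definition component (S : seq point) (c : point) (y : point) : Prop :=
  y \in S /\ connected_in S c y.

(* Main.v *)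
Require Import Defs.
From mathcomp Require Import all_boot.
From mathcomp Require Import zify.
Set Implicit Arguments.

Lemma conn_refl S a : a \in S -> connected_in S a a.
Proof. by move=> h; exists [::]; rewrite /grid_path_in /= h. Qed.

Lemma conn_step S a b : a \in S -> b \in S -> grid_adj a b -> connected_in S a b.
Proof. by move=> ha hb hab; exists [:: b]; rewrite /grid_path_in /= ha hb hab. Qed.

Lemma conn_trans S a b c : connected_in S a b -> connected_in S b c -> connected_in S a c.
Proof.
move=> [p [p1 [p2 p3]]] [q [q1 [q2 q3]]]; exists (p ++ q); split.
  by rewrite cat_path p1 p2 q1.
split; first by rewrite last_cat p2 q2.
move: p3 q3; rewrite /= all_cat => /andP[-> ->] /andP[_ ->] //.
Qed.

Lemma adj_sym a b : grid_adj a b -> grid_adj b a.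
Proof. by rewrite /grid_adj => /orP[/andP[/eqP -> /orP[]]|/andP[/eqP -> /orP[]]] ->;
  rewrite eqxx ?orbT. Qed.

Lemma conn_sym S a b : connected_in S a b -> connected_in S b a.
Proof.
move=> [p]; elim: p a => [|z p IH] a [p1 [p2 p3]].
  by rewrite /= in p2; subst b; apply: conn_refl; move: p3 => /= /andP[].
move: p1 p3 => /= /andP[haz hp] /andP[ha /andP[hz hall]].
apply: (@conn_trans _ _ z); first by apply: IH; split => //; rewrite /= hz.
by apply: conn_step => //; apply: adj_sym.
Qed.

Lemma conn_in S a b : connected_in S a b -> b \in S.
Proof.
move=> [p [_ [<- h]]]; move: h; elim: p a => [|z p IH] a /=; first by case/andP.
by case/andP=> _ h; apply: IH.
Qed.

Lemma conn_in1 S a b : connected_in S a b -> a \in S.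
Proof. by move=> [p [_ [_ /= /andP[h _]]]]. Qed.

Lemma ivt S a b y p : grid_path_in S a b p -> a.2 <= y <= b.2 ->
  exists z, z.2 = y /\ connected_in S a z.
Proof.
elim: p a => [|z p IH] a [p1 [p2 p3]] /andP[h1 h2].
  rewrite /= in p2; subst b; exists a; split; first by apply/eqP; rewrite eqn_leq h1 h2.
  by apply: conn_refl; move: p3 => /= /andP[].
case: (eqVneq a.2 y) => [<-|ne].
  by exists a; split => //; apply: conn_refl; move: p3 => /= /andP[].
move: p1 p3 => /= /andP[haz hp] /andP[ha /andP[hz hall]].
have hzy : z.2 <= y.
  move: haz; case: a z {IH p2 hall hp ha hz} h1 ne => a1 a2 [z1 z2] /= h1 ne.
  rewrite /grid_adj /= => /orP[/andP[_ /orP[]]|/andP[/eqP e _]] //; try move/eqP=> e; lia.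
have [w [hw1 hw2]] : exists w, w.2 = y /\ connected_in S z w.
  by apply: IH; [split => //=; rewrite hz | rewrite hzy].
exists w; split => //; apply: (conn_trans _ hw2); exact: conn_step.
Qed.

Lemma roww S y r : forall n px, r = px + n -> (px, y) \in S -> (r, y) \in S ->
  connected_in S (px, y) (r, y) \/
  exists k, k < r /\ (k, y) \in S /\ (k.+1, y) \notin S /\ connected_in S (px, y) (k, y).
Proof.
elim=> [|n IH] px e hp hr.
  by left; rewrite e addn0; apply: conn_refl.
case hq: ((px.+1, y) \in S).
  have st : connected_in S (px, y) (px.+1, y).
    by apply: conn_step => //; rewrite ?hq // /grid_adj /= !eqxx ?orbT //=; rewrite eqxx orbT.
  case: (IH px.+1) => //; first lia.
    by move=> h; left; apply: conn_trans st h.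
  move=> [k [k1 [k2 [k3 k4]]]]; right; exists k; do 3 split => //.
  exact: conn_trans st k4.
right; exists px; split; first lia.
by rewrite hp hq; split => //; split => //; apply: conn_refl.
Qed.

Lemma maxf_ge (S : seq point) i p : p \in S -> p.1 <= foldr (fun p m => maxn p.1 m) i S.
Proof. elim: S => //= q S IH; rewrite inE => /orP[/eqP ->|/IH h]; lia. Qed.
Lemma minf_le (S : seq point) i p : p \in S -> foldr (fun p m => minn p.2 m) i S <= p.2.
Proof. elim: S => //= q S IH; rewrite inE => /orP[/eqP ->|/IH h]; lia. Qed.
Lemma maxf2_ge (S : seq point) i p : p \in S -> p.2 <= foldr (fun p m => maxn p.2 m) i S.
Proof. elim: S => //= q S IH; rewrite inE => /orP[/eqP ->|/IH h]; lia. Qed.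

Theorem mainTheorem5 (G : seq point) (c : point) :
  has_connected_vbridge G ->
  c \in G ->
  (exists y, component G c y /\ y.1 = rS G) ->
  (forall y, component G c y -> y.2 <> bS G) ->
  exists xE : point, xE \in G /\ ~ component G c xE /\
    dirE xE \notin G /\ xE.1 <> rS G.
Proof.
move=> [x0 [Hb [Ht [P [HP _]]]]] Hc [[y1 y2] [[HyG Hcy] /= Hy1]] Hnb.
have bad : forall w, connected_in G c w -> connected_in G (x0, bS G) w -> False.
  move=> w h1 h2; apply: (Hnb (x0, bS G)) => //; split => //.
  exact: conn_trans h1 (conn_sym h2).
have [[z1 z2] [/= ez hz]] : exists z, z.2 = y2 /\ connected_in G (x0, bS G) z.
  apply: (@ivt G _ _ y2 P HP) => /=; apply/andP; split.
    exact: (@minf_le G _ _ HyG).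
  exact: (@maxf2_ge G _ _ HyG).
subst z2.
have hzG := conn_in hz.
have hz1 : z1 <= rS G by exact: (@maxf_ge G _ _ hzG).
case: (@roww G y2 y1 (y1 - z1) z1) => //; first lia.
  move=> h; exfalso; apply: (bad (y1, y2)) => //; exact: conn_trans hz h.
move=> [k [k1 [k2 [k3 k4]]]].
exists (k, y2); split => //; split; last by split => // /=; lia.
move=> [_ h]; apply: (bad (k, y2)) => //; exact: conn_trans hz k4.
Qed.
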